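(* Let $n\ge 7$ and let $r_1,\ldots,r_n$ be any positive reals. Then there exists a homothetic packing of $n$ cubes with radii $r_1,\ldots,r_n$ and more than $3n-3$ contacts.
   Context: Let $C=\{(x,y,z):-1\le x,y,z\le 1\}\subset\mathbb{R}^3$. A homothetic cube packing with radii $r_1,\ldots,r_n$ is a set $\{C_1,\ldots,C_n\}$ with $C_i=r_iC+p_i$, $p_i\in\mathbb{R}^3$, whose interiors are pairwise disjoint. A contact is an unordered pair $\{i,j\}$, $i\ne j$, with $C_i\cap C_j\ne\emptyset$. *)

(* Defs.v *)
From Stdlib Require Import Reals ClassicalEpsilon.
From mathcomp Require Import all_boot.

Set Implicit Arguments.
Local Open Scope R_scope.
Unset Strict Implicit.
Unset Printing Implicit Defensive.

Definition pt : Type := (R * R * R)%type.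

Definition stdC (c : pt) : Prop :=
  let '(c1, c2, c3) := c in
  Rabs c1 <= 1 /\ Rabs c2 <= 1 /\ Rabs c3 <= 1.

Definition hcube (r : R) (p : pt) (x : pt) : Prop :=
  exists c : pt, stdC c /\
    let '(c1, c2, c3) := c in
    let '(p1, p2, p3) := p in
    x = ((r * c1 + p1), (r * c2 + p2), (r * c3 + p3)).

Definition dist2 (x y : pt) : R :=
  let '(x1, x2, x3) := x in
  let '(y1, y2, y3) := y in
  ((x1 - y1) ^ 2 + (x2 - y2) ^ 2 + (x3 - y3) ^ 2).

Definition interior3 (S : pt -> Prop) (x : pt) : Prop :=
  exists eps : R, (0 < eps) /\ forall y : pt, (dist2 x y < eps ^ 2) -> S y.

Definition is_packing (n : nat) (r : 'I_n -> R) (p : 'I_n -> pt) : Prop :=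
  forall i j : 'I_n, i <> j ->
    ~ (exists x : pt, interior3 (hcube (r i) (p i)) x /\ interior3 (hcube (r j) (p j)) x).

Definition contact (n : nat) (r : 'I_n -> R) (p : 'I_n -> pt) (i j : 'I_n) : Prop :=
  exists x : pt, hcube (r i) (p i) x /\ hcube (r j) (p j) x.

Definition contactb (n : nat) (r : 'I_n -> R) (p : 'I_n -> pt) (i j : 'I_n) : bool :=
  if excluded_middle_informative (contact r p i j) then true else false.

Definition num_contacts (n : nat) (r : 'I_n -> R) (p : 'I_n -> pt) : nat :=
  #|[set ij : 'I_n * 'I_n | (ij.1 < ij.2)%N && contactb r p ij.1 ij.2]|.

(* Main.v *)
Require Import Defs.
From Stdlib Require Import Reals Lra Psatz ClassicalEpsilon.
From mathcomp Require Import all_boot zify.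
Set Implicit Arguments.

Module Geo.
Local Open Scope R_scope.

Lemma absle a b : Rabs a <= b -> -b <= a <= b.
Proof. unfold Rabs; destruct (Rcase_abs a); lra. Qed.

Lemma hcube_le r p1 p2 p3 x1 x2 x3 : hcube r (p1,p2,p3) (x1,x2,x3) -> 0 < r ->
  Rabs (x1 - p1) <= r /\ Rabs (x2 - p2) <= r /\ Rabs (x3 - p3) <= r.
Proof.
move=> [[[c1 c2] c3] [[H1 [H2 H3]] E]] Hr; case: E => -> -> ->.
have K : forall c p, Rabs c <= 1 -> Rabs (r * c + p - p) <= r.
  move=> c p Hc; replace (r*c+p-p) with (r*c) by ring.
  rewrite Rabs_mult Rabs_pos_eq; last lra. nra.
split; [|split]; apply K; done.
Qed.

Lemma hcube_of r p1 p2 p3 x1 x2 x3 : 0 < r ->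
  Rabs (x1 - p1) <= r -> Rabs (x2 - p2) <= r -> Rabs (x3 - p3) <= r ->
  hcube r (p1,p2,p3) (x1,x2,x3).
Proof.
move=> Hr H1 H2 H3.
have K : forall a, Rabs a <= r -> Rabs (a / r) <= 1 /\ r * (a / r) = a.
  move=> a Ha; have E : r * (a / r) = a by field; lra.
  split=> //. apply Rabs_le. have := (@absle _ _ Ha).
  have := (@absle _ _ Ha). set u := a / r. move: E; fold u. nra.
exists ((x1-p1)/r, (x2-p2)/r, (x3-p3)/r).
have [A1 B1] := K _ H1; have [A2 B2] := K _ H2; have [A3 B3] := K _ H3.
split; first by split; [|split].
rewrite B1 B2 B3. f_equal; [f_equal|]; ring.
Qed.

Lemma interior_lt r p1 p2 p3 x1 x2 x3 : 0 < r ->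
  interior3 (hcube r (p1,p2,p3)) (x1,x2,x3) ->
  Rabs (x1 - p1) < r /\ Rabs (x2 - p2) < r /\ Rabs (x3 - p3) < r.
Proof.
move=> Hr [e [He H]].
have Pe : (e/2)^2 < e^2 by nra.
have D1 : forall s, s = e/2 \/ s = - (e/2) -> dist2 (x1,x2,x3) (x1+s,x2,x3) < e^2.
  move=> s Hs; rewrite /dist2; case: Hs => ->; nra.
have D2 : forall s, s = e/2 \/ s = - (e/2) -> dist2 (x1,x2,x3) (x1,x2+s,x3) < e^2.
  move=> s Hs; rewrite /dist2; case: Hs => ->; nra.
have D3 : forall s, s = e/2 \/ s = - (e/2) -> dist2 (x1,x2,x3) (x1,x2,x3+s) < e^2.
  move=> s Hs; rewrite /dist2; case: Hs => ->; nra.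
have K : forall a, Rabs (a + e/2) <= r -> Rabs (a + - (e/2)) <= r -> Rabs a < r.
  move=> a A B; have := (@absle _ _ A); have := (@absle _ _ B).
  move=> ? ?; apply Rabs_def1; lra.
split; [|split].
- have [A _] := hcube_le (H _ (D1 _ (or_introl erefl))) Hr.
  have [B _] := hcube_le (H _ (D1 _ (or_intror erefl))) Hr.
  apply K; [replace (x1 - p1 + e/2) with (x1 + e/2 - p1) by ring | replace (x1 - p1 + - (e/2)) with (x1 + - (e/2) - p1) by ring]; assumption.
- have [_ [A _]] := hcube_le (H _ (D2 _ (or_introl erefl))) Hr.
  have [_ [B _]] := hcube_le (H _ (D2 _ (or_intror erefl))) Hr.
  apply K; [replace (x2 - p2 + e/2) with (x2 + e/2 - p2) by ring | replace (x2 - p2 + - (e/2)) with (x2 + - (e/2) - p2) by ring]; assumption.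
- have [_ [_ A]] := hcube_le (H _ (D3 _ (or_introl erefl))) Hr.
  have [_ [_ B]] := hcube_le (H _ (D3 _ (or_intror erefl))) Hr.
  apply K; [replace (x3 - p3 + e/2) with (x3 + e/2 - p3) by ring | replace (x3 - p3 + - (e/2)) with (x3 + - (e/2) - p3) by ring]; assumption.
Qed.

Lemma no_common r1 r2 a1 a2 a3 b1 b2 b3 : 0 < r1 -> 0 < r2 ->
  (a1 + r1 <= b1 - r2 \/ b1 + r2 <= a1 - r1 \/ a2 + r1 <= b2 - r2 \/
   b2 + r2 <= a2 - r1 \/ a3 + r1 <= b3 - r2 \/ b3 + r2 <= a3 - r1) ->
  ~ (exists x, interior3 (hcube r1 (a1,a2,a3)) x /\ interior3 (hcube r2 (b1,b2,b3)) x).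
Proof.
move=> h1 h2 H [[[x1 x2 x3]] [I1 I2]].
have [A1 [A2 A3]] := interior_lt h1 I1.
have [B1 [B2 B3]] := interior_lt h2 I2.
move: (Rabs_def2 _ _ A1) (Rabs_def2 _ _ A2) (Rabs_def2 _ _ A3).
move: (Rabs_def2 _ _ B1) (Rabs_def2 _ _ B2) (Rabs_def2 _ _ B3).
lra.
Qed.

Lemma ex_min4 (T : 'I_4 -> R) : exists q, forall q', T q <= T q'.
Proof.
have : forall s : seq 'I_4, forall q0, exists q, forall q', q' \in q0 :: s -> T q <= T q'.
  elim=> [|a s IH] q0.
    by exists q0 => q'; rewrite inE => /eqP ->; lra.
  have [q Hq] := IH q0.
  destruct (Rle_dec (T a) (T q)) as [h|h].
  - exists a => q'; rewrite !inE => /orP [/eqP ->|/orP [/eqP ->|Hs]].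
    + have := Hq q0; rewrite inE eqxx => /(_ isT); lra.
    + lra.
    + have := Hq q'; rewrite inE Hs orbT => /(_ isT); lra.
  - exists q => q'; rewrite !inE => /orP [/eqP ->|/orP [/eqP ->|Hs]].
    + by apply: Hq; rewrite inE eqxx.
    + lra.
    + by apply: Hq; rewrite inE Hs orbT.
move=> /(_ (enum 'I_4) ord0) [q Hq]; exists q => q'; apply: Hq.
by rewrite inE mem_enum orbT.
Qed.

Definition amin (T : 'I_4 -> R) : 'I_4 :=
  proj1_sig (constructive_indefinite_description _ (ex_min4 T)).

Lemma amin_le T q : T (amin T) <= T q.
Proof. rewrite /amin; case: constructive_indefinite_description => x /= H; exact: H. Qed.

Section Conf.
Variable rr : nat -> R.
Hypothesis rpos : forall k, 0 < rr k.

Fixpoint st (m : nat) : ('I_4 -> R) * ('I_4 -> nat) :=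
  match m with
  | 0%N => (fun q : 'I_4 => 2 * rr (4 + q), fun q : 'I_4 => (4 + q)%N)
  | m'.+1 => let s := st m' in let q0 := amin s.1 in
     (fun q : 'I_4 => if q == q0 then s.1 q + 2 * rr (8 + m') else s.1 q,
      fun q : 'I_4 => if q == q0 then (8 + m')%N else s.2 q)
  end.

Definition Q (j : nat) : 'I_4 :=
  if (j < 8)%N then inord (if (j < 4)%N then j else j - 4)%N else amin (st (j - 8)%N).1.

Definition Sz (j : nat) : R :=
  if (j < 4)%N then -2 * rr j else if (j < 8)%N then 0 else (st (j - 8)%N).1 (Q j).

Definition Inv m := forall q, (((st m).2 q < 8 + m)%N /\ Q ((st m).2 q) = q /\
  (st m).1 q = Sz ((st m).2 q) + 2 * rr ((st m).2 q) /\
  (forall q', Sz ((st m).2 q) <= (st m).1 q') /\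
  (forall j, (j < 8 + m)%N -> Q j = q -> Sz j + 2 * rr j <= (st m).1 q)).

Lemma Q_low (j : nat) : (j < 8)%N -> nat_of_ord (Q j) = (if (j < 4)%N then j else j - 4)%N.
Proof.
move=> hj; rewrite /Q hj; case: ifP => h; rewrite inordK //; lia.
Qed.

Lemma Inv0 : Inv 0.
Proof.
move=> q /=; have lq := ltn_ord q.
have hQ : Q (4 + q) = q.
  apply: val_inj; rewrite /= Q_low; last lia.
  have -> : (4 + q < 4)%N = false by lia.
  lia.
have hS : Sz (4 + q) = 0.
  have h1 : (4 + q < 4)%N = false by lia.
  have h2 : (4 + q < 8)%N = true by lia.
  by rewrite /Sz h1 h2.
rewrite hS hQ; split; first lia.
split=> //; split; first lra.
split; first by move=> q'; have := rpos (4 + q'); lra.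
move=> j hj hjq.
have hj8 : (j < 8)%N by lia.
have := Q_low j hj8; rewrite hjq.
have := rpos (4+q); rewrite /Sz.
case: ifP => h1 H0 Hv.
  have -> : j = q by lia. lra.
case: ifP => h2 in Hv *; last lia.
 have -> : j = (4 + q)%N by lia. lra.
Qed.
Lemma Qk m : Q (8 + m) = amin (st m).1.
Proof.
rewrite /Q. have -> : (8 + m < 8)%N = false by lia.
by have -> : (8 + m - 8 = m)%N by lia.
Qed.

Lemma Szk m : Sz (8 + m) = (st m).1 (amin (st m).1).
Proof.
rewrite /Sz. have -> : (8 + m < 4)%N = false by lia.
have -> : (8 + m < 8)%N = false by lia.
by rewrite Qk; have -> : (8 + m - 8 = m)%N by lia.
Qed.

Lemma st1 m q : (st m.+1).1 q = if q == amin (st m).1 then (st m).1 q + 2 * rr (8 + m) else (st m).1 q.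
Proof. by []. Qed.
Lemma st2 m q : (st m.+1).2 q = if q == amin (st m).1 then (8 + m)%N else (st m).2 q.
Proof. by []. Qed.

Lemma st_mono m q : (st m).1 q <= (st m.+1).1 q.
Proof. rewrite st1; case: ifP => _; have := rpos (8 + m); lra. Qed.

Lemma InvS m : Inv m -> Inv m.+1.
Proof.
move=> I q; rewrite st1 st2.
have [IL [IQ [IT [IS IJ]]]] := I q.
set T := (st m).1; set L := (st m).2; set q0 := amin T.
have hmin : forall q', T q0 <= T q' by move=> q'; apply: amin_le.
have hmono : forall q', T q' <= (st m.+1).1 q' by move=> q'; apply: st_mono.
case: (eqVneq q q0) => [Eq|hq].
- rewrite Eq. split; first lia.
  split; first by rewrite Qk.
  rewrite Szk -/T -/q0. split; first by [].
  split; first by move=> q'; apply: Rle_trans (hmin q') (hmono q').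
  move=> j hj hjq.
  have [->|hj'] : j = (8 + m)%N \/ (j < 8 + m)%N by lia.
    by rewrite Szk -/T -/q0; lra.
  have := IJ j hj'; rewrite Eq => /(_ hjq). rewrite -/T; have := rpos (8 + m); lra.
- rewrite /L /T; split; first lia.
  split; first by [].
  split; first by [].
  split; first by move=> q'; apply: Rle_trans (IS q') (hmono q').
  move=> j hj hjq.
  have [Ej|hj'] : j = (8 + m)%N \/ (j < 8 + m)%N by lia.
    by move: hjq; rewrite Ej Qk -/T -/q0 => E; rewrite E eqxx in hq.
  exact: IJ.
Qed.

Lemma Inv_all m : Inv m.
Proof. elim: m => [|m IH]; [exact: Inv0 | exact: InvS]. Qed.

Lemma sep j j' : (j < j')%N -> Q j = Q j' -> Sz j + 2 * rr j <= Sz j'.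
Proof.
move=> hlt hq.
case: (ltnP j' 8) => h'.
  have h : (j < 8)%N by lia.
  have := Q_low j h; have := Q_low j' h'; rewrite hq => E1 E2.
  rewrite E1 in E2; move: E2.
  rewrite /Sz h h'.
  have := rpos j; have := rpos j'.
  case: (boolP (j < 4)%N) => a; case: (boolP (j' < 4)%N) => b /= r1 r2 E; try lia.
  - lra.
have [I1 [I2 [I3 [I4 I5]]]] := Inv_all (j' - 8) (Q j').
have -> : Sz j' = (st (j' - 8)).1 (Q j').
  rewrite /Sz. have -> : (j' < 4)%N = false by lia.
  by have -> : (j' < 8)%N = false by lia.
apply: I5 => //; lia.
Qed.

Lemma low_touch j : (j < 8)%N -> Sz j <= 0 <= Sz j + 2 * rr j.
Proof.
move=> h; have := rpos j; rewrite /Sz h; case: ifP => _; lra.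
Qed.

Lemma high_touch m q : Sz ((st m).2 q) <= Sz (8 + m) <= Sz ((st m).2 q) + 2 * rr ((st m).2 q).
Proof.
have [I1 [I2 [I3 [I4 I5]]]] := Inv_all m q.
rewrite Szk; split; first exact: I4.
rewrite -I3; exact: amin_le.
Qed.

Lemma L_inj m : injective (st m).2.
Proof.
move=> q q' E.
have [_ [A _]] := Inv_all m q; have [_ [B _]] := Inv_all m q'.
by rewrite -A -B E.
Qed.

Lemma L_lt m q : ((st m).2 q < 8 + m)%N.
Proof. by have [A _] := Inv_all m q. Qed.

End Conf.

Definition sx (q : 'I_4) : R := if (q < 2)%N then 1 else -1.
Definition sy (q : 'I_4) : R := if odd q then 1 else -1.

Lemma sxy q q' : q != q' ->
  (sx q = 1 /\ sx q' = -1) \/ (sx q = -1 /\ sx q' = 1) \/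
  (sy q = 1 /\ sy q' = -1) \/ (sy q = -1 /\ sy q' = 1).
Proof.
move: q q' => [a Ha] [b Hb]; rewrite /sx /sy -val_eqE /= => hab.
have : (a = 0 \/ a = 1 \/ a = 2 \/ a = 3)%N by lia.
have : (b = 0 \/ b = 1 \/ b = 2 \/ b = 3)%N by lia.
move=> [Eb|[Eb|[Eb|Eb]]] [Ea|[Ea|[Ea|Ea]]]; subst a b; move: hab; rewrite /= => hab; try tauto; by [].
Qed.

Lemma sx_abs q a : 0 < a -> Rabs (0 - sx q * a) <= a.
Proof.
move=> ha; rewrite /sx; case: ifP => _; apply: Rabs_le; lra.
Qed.
Lemma sy_abs q a : 0 < a -> Rabs (0 - sy q * a) <= a.
Proof.
move=> ha; rewrite /sy; case: ifP => _; apply: Rabs_le; lra.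
Qed.

Section Conf2.
Variable rr : nat -> R.
Hypothesis rpos : forall k, 0 < rr k.

Definition cpos (j : nat) : pt :=
  (sx (Q rr j) * rr j, sy (Q rr j) * rr j, Sz rr j + rr j).

Lemma pack_lt j j' : (j < j')%N ->
  ~ (exists x, interior3 (hcube (rr j) (cpos j)) x /\ interior3 (hcube (rr j') (cpos j')) x).
Proof.
move=> hlt; apply: no_common; try exact: rpos.
case: (eqVneq (Q rr j) (Q rr j')) => [E|N].
  have := @sep rr rpos j j' hlt E; lra.
have := rpos j; have := rpos j'.
case: (@sxy _ _ N) => [[-> ->]|[[-> ->]|[[-> ->]|[-> ->]]]]; lra.
Qed.

Lemma pack_ne j j' : j <> j' ->
  ~ (exists x, interior3 (hcube (rr j) (cpos j)) x /\ interior3 (hcube (rr j') (cpos j')) x).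
Proof.
move=> hne; case: (ltngtP j j') => h.
- exact: pack_lt.
- move=> [x [A B]]; apply: (pack_lt h); exists x; tauto.
- by [].
Qed.

Lemma touch j k z : Sz rr j <= z <= Sz rr j + 2 * rr j -> Sz rr k <= z <= Sz rr k + 2 * rr k ->
  exists x, hcube (rr j) (cpos j) x /\ hcube (rr k) (cpos k) x.
Proof.
move=> A B; exists (0, 0, z); split; apply: hcube_of;
  (try exact: rpos); (try exact: sx_abs); (try exact: sy_abs); apply: Rabs_le; lra.
Qed.

End Conf2.

End Geo.
Import Geo.

Lemma card_pairs n (P : 'I_n -> 'I_n -> bool) :
  #|[set ij : 'I_n * 'I_n | P ij.1 ij.2]| = \sum_(k < n) #|[set j : 'I_n | P j k]|.
Proof.
rewrite -sum1_card.
rewrite (eq_bigl (fun p : 'I_n * 'I_n => xpredT p.1 && P p.1 p.2)); last by move=> ij; rewrite inE.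
rewrite -(pair_big_dep xpredT (fun i j => P i j) (fun _ _ => 1%N)) /=.
rewrite (eq_bigr (fun i => \sum_j (if P i j then 1 else 0)%N)); last by move=> i _; rewrite big_mkcond.
rewrite exchange_big /=.
apply: eq_bigr => k _.
rewrite -big_mkcond /= -sum1_card.
by apply: eq_bigl => j; rewrite inE.
Qed.

Definition bnd (k : nat) : nat := if (k < 8)%N then k else 4.

Lemma sum_bnd n : (7 <= n)%N -> (3 * n - 3 < \sum_(k < n) bnd k)%N.
Proof.
move=> h; rewrite -(big_mkord xpredT bnd).
have [m ->] : exists m, n = (m + 7)%N by exists (n - 7)%N; lia.
elim: m => [|m IH].
  by rewrite !big_nat_recr //= big_geq.
rewrite addSn big_nat_recr //=.
have : (3 <= bnd (m + 7))%N by rewrite /bnd; case: ifP; lia.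
lia.
Qed.

Lemma contactb_true n (r : 'I_n -> R) p i j : contact r p i j -> contactb r p i j.
Proof. by rewrite /contactb; case: excluded_middle_informative. Qed.

Theorem proposition24 (n : nat) (r : 'I_n -> R) :
  (7 <= n)%N -> (forall i : 'I_n, Rlt 0 (r i)) ->
  exists p : 'I_n -> pt, is_packing r p /\ (3 * n - 3 < num_contacts r p)%N.
Proof.
case: n r => [|n] r h7 hr; first by [].
pose rr k := r (inord k).
have rpos : forall k, Rlt 0 (rr k) by move=> k; apply: hr.
have Hr : forall i : 'I_n.+1, r i = rr i by move=> i; rewrite /rr inord_val.
exists (fun i => cpos rr i); split.
  move=> i j hij; rewrite !Hr; apply: (@pack_ne rr rpos) => E; apply: hij; exact: val_inj.
rewrite /num_contacts (card_pairs (fun a b => (a < b)%N && contactb r (fun i => cpos rr i) a b)); apply: (leq_trans (@sum_bnd _ h7)).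
apply: leq_sum => k _; rewrite /bnd; case: ifP => hk.
  have Hk : (k <= n.+1)%N := ltnW (ltn_ord k).
  apply: (@leq_trans #|[set widen_ord Hk x | x : 'I_k]|).
    by rewrite card_imset ?cardsT ?card_ord //; by move=> a b E; apply: val_inj; have := congr1 val E.
  apply: subset_leq_card; apply/subsetP => _ /imsetP [x _ ->]; rewrite inE /=.
  rewrite ltn_ord /=; apply: contactb_true; rewrite /contact !Hr /=.
  apply: (@touch rr rpos _ _ 0); apply: low_touch => //=; have := ltn_ord x; lia.
have Lk : forall q, ((st rr (k - 8)).2 q < k)%N.
  move=> q; have := @L_lt rr rpos (k - 8) q; lia.
have hkn := ltn_ord k.
pose f q := (inord ((st rr (k - 8)).2 q) : 'I_n.+1).
have fv : forall q, nat_of_ord (f q) = (st rr (k - 8)).2 q.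
  move=> q; rewrite /f inordK //; have := Lk q; lia.
apply: (@leq_trans #|[set f q | q : 'I_4]|).
  rewrite card_imset ?cardsT ?card_ord //.
  move=> q q' E; apply: (@L_inj rr rpos (k - 8)%N); by rewrite -!fv E.
apply: subset_leq_card; apply/subsetP => _ /imsetP [q _ ->]; rewrite inE /=.
rewrite fv Lk /=; apply: contactb_true; rewrite /contact !Hr /= fv.
have := @high_touch rr rpos (k - 8) q.
have -> : (8 + (k - 8) = k)%N by lia.
move=> H; apply: (@touch rr rpos _ _ (Sz rr k)) => //.
have := rpos k; lra.
Qed.
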